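(* Let $L$ be a finite-dimensional Lie superalgebra, let $(K,\lambda)\in C(L)$, let $M$ be any Lie superalgebra and $\sigma\in\mathrm{Hom}(M,L)$ surjective. If $\tau\in\mathrm{Hom}(M,K)$ satisfies $\lambda\circ\tau=\sigma$, then $\tau$ is surjective.
   Context: Lie superalgebras over a field of characteristic $\neq 2,3$; $\mathrm{Hom}(A,B)$ denotes Lie superalgebra homomorphisms (even, bracket-preserving). $Z(K)$ is the center, $K'=[K,K]$. $C(L)$ is the class of pairs $(K,\lambda)$, $K$ a Lie superalgebra, $\lambda\in\mathrm{Hom}(K,L)$ surjective with $\mathrm{Ker}(\lambda)\subseteq K'\cap Z(K)$. *)

(* Defs.v *)
From HB Require Import structures.
From mathcomp Require Import all_boot all_order all_algebra.
Set Implicit Arguments.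
Unset Strict Implicit.
Unset Printing Implicit Defensive.
Import GRing.Theory.
Local Open Scope ring_scope.

Section LieSuper.
Variable F : fieldType.

(* Axioms of a Lie superalgebra on the F-vector space V with homogeneous
   components par false (= V_0, even) and par true (= V_1, odd), and bracket br. *)
Definition lie_super_axioms (V : lmodType F) (par : bool -> {pred V})
    (br : V -> V -> V) : Prop :=
  [/\
      (forall i, 0 \in par i /\
         forall (a : F) x y, x \in par i -> y \in par i -> a *: x + y \in par i),
      (forall v, exists x0 x1, [/\ x0 \in par false, x1 \in par true & v = x0 + x1]),
      (forall v, v \in par false -> v \in par true -> v = 0),
      (forall (a : F) x y z, br (a *: x + y) z = a *: br x z + br y z)
    & [/\ (forall (a : F) x y z, br z (a *: x + y) = a *: br z x + br z y),
      (forall i j x y, x \in par i -> y \in par j -> br x y \in par (i (+) j)),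
      (forall i j x y, x \in par i -> y \in par j ->
         br x y = - (((-1) ^+ (i && j) : F) *: br y x))
    &
      (forall i j k x y z, x \in par i -> y \in par j -> z \in par k ->
         ((-1) ^+ (i && k) : F) *: br x (br y z)
       + ((-1) ^+ (j && i) : F) *: br y (br z x)
       + ((-1) ^+ (k && j) : F) *: br z (br x y) = 0)]].

Record lieSuper := LieSuper {
  ls_carrier :> lmodType F;
  ls_par : bool -> {pred ls_carrier};
  ls_br : ls_carrier -> ls_carrier -> ls_carrier;
  ls_ax : lie_super_axioms ls_par ls_br }.

Definition is_hom (A B : lieSuper) (f : A -> B) : Prop :=
  [/\ (forall (a : F) x y, f (a *: x + y) = a *: f x + f y),
      (forall i x, x \in @ls_par A i -> f x \in @ls_par B i)
    & (forall x y, f (@ls_br A x y) = @ls_br B (f x) (f y))].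

Definition surj (A B : Type) (f : A -> B) : Prop := forall y, exists x, f x = y.

Definition in_center (K : lieSuper) (z : K) : Prop := forall x : K, @ls_br K z x = 0.

Definition in_derived (K : lieSuper) (z : K) : Prop :=
  exists s : seq (F * K * K), z = \sum_(p <- s) p.1.1 *: @ls_br K p.1.2 p.2.

Definition finite_dim (V : lmodType F) : Prop :=
  exists s : seq V, forall v, exists c : seq F,
    v = \sum_(i < size s) c`_i *: s`_i.

Definition in_C (L K : lieSuper) (lambda : K -> L) : Prop :=
  [/\ is_hom lambda, surj lambda
    & forall z : K, lambda z = 0 -> in_derived z /\ in_center z].

End LieSuper.

(* Main.v *)
Require Import Defs.
From mathcomp Require Import all_boot all_order all_algebra.
Local Open Scope ring_scope.
Import GRing.Theory.

Section Helpers.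
Variable F : fieldType.

Lemma lin_facts (U V : lmodType F) (f : U -> V) :
  (forall (a : F) x y, f (a *: x + y) = a *: f x + f y) ->
  [/\ f 0 = 0, (forall x y, f (x + y) = f x + f y),
      (forall a x, f (a *: x) = a *: f x) & (forall x, f (- x) = - f x)].
Proof.
move=> H.
have f0 : f 0 = 0.
  have := H 1 0 0; rewrite !scale1r addr0 => h.
  by apply: (addrI (f 0)); rewrite addr0 -h.
have fD : forall x y, f (x + y) = f x + f y by move=> x y; have := H 1 x y; rewrite !scale1r.
have fZ : forall a x, f (a *: x) = a *: f x.
  by move=> a x; have := H a x 0; rewrite !addr0 f0 addr0.
split=> // x; by rewrite -scaleN1r fZ scaleN1r.
Qed.

Lemma centL (K : lieSuper F) (z : K) :
  in_center z -> forall x : K, ls_br x z = 0.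
Proof.
move=> Hz x.
case: (ls_ax K) => Hsub Hdec Hint Hbl [Hbr Hev Hskew Hjac].
have blD : forall w x y : K, ls_br (x + y) w = ls_br x w + ls_br y w.
  by move=> w u1 u2; have [_ h _ _] := @lin_facts _ _ (fun v => ls_br v w) (fun (a : F) (u v : K) => Hbl a u v w).
have brD : forall w x y : K, ls_br w (x + y) = ls_br w x + ls_br w y.
  by move=> w u1 u2; have [_ h _ _] := @lin_facts _ _ (fun v => ls_br w v) (fun (a : F) (u v : K) => Hbr a u v w).
have parN : forall i (v : K), v \in @ls_par _ K i -> - v \in @ls_par _ K i.
  move=> i v hv; have [h0 hc] := Hsub i.
  by have := hc (-1) v 0 hv h0; rewrite addr0 scaleN1r.
have [z0 [z1 [hz0 hz1 ez]]] := Hdec z.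
rewrite ez in Hz *.
have key : forall i (xi : K), xi \in @ls_par _ K i -> ls_br xi z0 = 0 /\ ls_br xi z1 = 0.
  move=> i xi hxi.
  have e : ls_br z0 xi = - ls_br z1 xi.
    by apply/eqP; rewrite -subr_eq0 opprK -blD (Hz xi).
  have p0 := Hev _ _ _ _ hz0 hxi.
  have p1 := Hev _ _ _ _ hz1 hxi.
  have p1' : ls_br z0 xi \in @ls_par _ K (true (+) i) by rewrite e; apply: parN.
  have e0 : ls_br z0 xi = 0.
    by case: i {hxi p1 e} p0 p1' => /= ? ?; apply: Hint.
  have e1 : ls_br z1 xi = 0 by apply: oppr_inj; rewrite -e e0 oppr0.
  split.
    by rewrite (Hskew _ _ _ _ hxi hz0) e0 scaler0 oppr0.
  by rewrite (Hskew _ _ _ _ hxi hz1) e1 scaler0 oppr0.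
have [x0 [x1 [hx0 hx1 ->]]] := Hdec x.
have [a1 a2] := key _ _ hx0.
have [b1 b2] := key _ _ hx1.
by rewrite blD !brD a1 a2 b1 b2 !addr0.
Qed.

End Helpers.

Theorem lemma4p2 (F : fieldType)
  (hF : (2 \notin [pchar F])%N /\ (3 \notin [pchar F])%N)
  (L K M : lieSuper F) (lambda : K -> L) (sigma : M -> L) (tau : M -> K) :
  finite_dim L ->
  in_C lambda ->
  is_hom sigma -> surj sigma ->
  is_hom tau ->
  (forall m : M, lambda (tau m) = sigma m) ->
  surj tau.
Proof.
move=> _ [[lamL _ _] _ Hker] [sigL _ _] sigS [tauL _ tauB] Hcomm.
have [l0 lD lZ lN] := @lin_facts _ _ _ _ lamL.
have [t0 tD tZ tN] := @lin_facts _ _ _ _ tauL.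
have dec : forall k : K, exists m, lambda (k - tau m) = 0.
  move=> k; have [m hm] := sigS (lambda k); exists m.
  by rewrite lD lN Hcomm hm subrr.
case: (ls_ax K) => Hsub Hdec Hint Hbl [Hbr Hev Hskew Hjac].
have blD : forall w x y : K, ls_br (x + y) w = ls_br x w + ls_br y w.
  by move=> w u1 u2; have [_ h _ _] := @lin_facts _ _ _ (fun v => ls_br v w) (fun (a : F) (u v : K) => Hbl a u v w).
have brD : forall w x y : K, ls_br w (x + y) = ls_br w x + ls_br w y.
  by move=> w u1 u2; have [_ h _ _] := @lin_facts _ _ _ (fun v => ls_br w v) (fun (a : F) (u v : K) => Hbr a u v w).
have brim : forall x y : K, exists m, tau m = ls_br x y.
  move=> x y.
  have [a ha] := dec x; have [b hb] := dec y.
  have [_ c1] := Hker _ ha; have [_ c2] := Hker _ hb.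
  exists (ls_br a b).
  rewrite -[x](subrK (tau a)) -[y](subrK (tau b)).
  by rewrite blD c1 add0r brD (@centL _ _ _ c2) add0r tauB.
have der : forall z : K, in_derived z -> exists m, tau m = z.
  move=> z [s ->]; elim: s => [|p s [m hm]].
    by exists 0; rewrite big_nil t0.
  have [m' hm'] := brim p.1.2 p.2.
  by exists (p.1.1 *: m' + m); rewrite big_cons tD tZ hm hm'.
move=> k; have [m hm] := dec k.
have [d _] := Hker _ hm.
have [m' hm'] := der _ d.
by exists (m + m'); rewrite tD hm' addrC subrK.
Qed.
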